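(* Let $h\ge0$ be a measurable function on $\mathbb R_+$ and let $\alpha=\{\alpha_n\}_{n\ge0}$ be a sequence with $\alpha_n\in[3,4]$ for all $n$, such that $[h,\alpha]<\infty$. Then $[h]_{2,\ell^1}<\infty$ (i.e. $h\in A_2(\mathbb R_+,\ell^1)$), and $[h]_{2,\ell^1}\le c\,[h,\alpha]$ for an absolute constant $c$.
   Context: For a nonnegative $f$ and a set $E$ of positive measure, $\langle f\rangle_E=\frac1{|E|}\int_Ef\,dx$. For $x,y\ge0$, $I_{x,y}=[x,x+y)$. For $h\ge0$ on $\mathbb R_+$ and a sequence $\alpha=\{\alpha_n\}$ of positive numbers, $[h,\alpha]=\sum_{n=0}^\infty\big(\langle h\rangle_{I_{n,\alpha_n}}\langle h^{-1}\rangle_{I_{n,\alpha_n}}-1\big)\in[0,\infty]$. $[h]_{2,\ell^1}=[h,\mathbf 2]$, where $\mathbf 2$ is the constant sequence $2,2,\dots$; $A_2(\mathbb R_+,\ell^1)$ is the class of $h\ge0$ with $[h]_{2,\ell^1}<\infty$. *)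

(* Defs.v *)
From Stdlib Require Import Reals Lra Classical ClassicalEpsilon.
Open Scope R_scope.

(* extended nonnegative reals [0, +oo] *)
Inductive ER : Type := Fin : R -> ER | Inf : ER.

Definition ER_le (x y : ER) : Prop :=
  match x, y with
  | Fin a, Fin b => a <= b
  | _, Inf => True
  | Inf, Fin _ => False
  end.

Definition ER_lt (x y : ER) : Prop :=
  match x, y with
  | Fin a, Fin b => a < b
  | Fin _, Inf => True
  | Inf, _ => False
  end.

Definition ER_plus (x y : ER) : ER :=
  match x, y with
  | Fin a, Fin b => Fin (a + b)
  | _, _ => Inf
  end.

(* product of nonnegative extended reals, with the convention 0 * oo = oo
   (the one making <h><h^-1> >= 1 always, as needed for [h,alpha] in [0,oo]) *)
Definition ER_mult (x y : ER) : ER :=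
  match x, y with
  | Fin a, Fin b => Fin (a * b)
  | _, _ => Inf
  end.

Definition ER_minus1 (x : ER) : ER :=
  match x with Fin a => Fin (a - 1) | Inf => Inf end.

Fixpoint ER_sum (f : nat -> ER) (N : nat) : ER :=
  match N with
  | O => Fin 0
  | S N' => ER_plus (ER_sum f N') (f N')
  end.

Definition is_glb (P : R -> Prop) (m : R) : Prop :=
  (forall x, P x -> m <= x) /\ (forall m', (forall x, P x -> m' <= x) -> m' <= m).

Definition ER_sup (P : R -> Prop) : ER :=
  match excluded_middle_informative (exists m, is_lub P m) with
  | left H => Fin (proj1_sig (constructive_indefinite_description _ H))
  | right _ => Inf
  end.

(* infimum of a set of reals (+oo if the set is empty) *)
Definition ER_inf (P : R -> Prop) : ER :=
  match excluded_middle_informative (exists m, is_glb P m) with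
  | left H => Fin (proj1_sig (constructive_indefinite_description _ H))
  | right _ => Inf
  end.

Definition outer_measure (E : R -> Prop) : ER :=
  ER_inf (fun s => exists a b : nat -> R,
            (forall k, a k <= b k) /\
            (forall x, E x -> exists k, a k <= x < b k) /\
            infinite_sum (fun k => b k - a k) s).

Definition lebesgue_measurable (E : R -> Prop) : Prop :=
  forall A : R -> Prop,
    outer_measure A =
    ER_plus (outer_measure (fun x => A x /\ E x))
            (outer_measure (fun x => A x /\ ~ E x)).

Definition measurable_on_Rplus (h : R -> R) : Prop :=
  forall t : R, lebesgue_measurable (fun x => 0 <= x /\ t < h x).

(* Lebesgue integral over E of a nonnegative [0,oo]-valued function f, via the
   layer-cake formula  int_E f = int_0^oo |{x in E : f x > t}| dt ; the
   t-integral of the nonincreasing distribution function g is computed as the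
   supremum of its right-endpoint sums  sum_{k=1}^N g(k/n)/n  (n >= 1). *)
Definition distribution (E : R -> Prop) (f : R -> ER) (t : R) : ER :=
  outer_measure (fun x => E x /\ ER_lt (Fin t) (f x)).

Definition integral (E : R -> Prop) (f : R -> ER) : ER :=
  ER_sup (fun s => exists n N : nat,
    ER_le (Fin s)
      (ER_sum (fun k => ER_mult (Fin (/ INR (S n)))
                          (distribution E f (INR (S k) / INR (S n)))) N)).

Definition Ixy (x y : R) : R -> Prop := fun z => x <= z /\ z < x + y.

Definition avg (x y : R) (f : R -> ER) : ER :=
  ER_mult (Fin (/ y)) (integral (Ixy x y) f).

Definition ER_of (h : R -> R) : R -> ER := fun x => Fin (h x).
Definition ER_inv (h : R -> R) : R -> ER :=
  fun x => if Req_EM_T (h x) 0 then Inf else Fin (/ h x).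

Definition bracket_term (h : R -> R) (alpha : nat -> R) (n : nat) : ER :=
  ER_minus1 (ER_mult (avg (INR n) (alpha n) (ER_of h))
                     (avg (INR n) (alpha n) (ER_inv h))).

Definition bracket (h : R -> R) (alpha : nat -> R) : ER :=
  ER_sup (fun s => exists N : nat, ER_le (Fin s) (ER_sum (bracket_term h alpha) N)).

Definition A2_l1_const (h : R -> R) : ER := bracket h (fun _ => 2).

Definition in_A2_l1 (h : R -> R) : Prop := A2_l1_const h <> Inf.

(* Main.v *)
Require Import Defs.
From Stdlib Require Import Reals Lia Psatz Lra ZArith List FunctionalExtensionality PropExtensionality Classical ClassicalEpsilon.
Open Scope R_scope.


Lemma set_ext (E1 E2 : R -> Prop) : (forall x, E1 x <-> E2 x) -> E1 = E2.
Proof. intro H; apply functional_extensionality; intro x; apply propositional_extensionality; auto. Qed.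

Lemma sup_fin P m : ER_sup P = Fin m -> is_lub P m.
Proof.
  unfold ER_sup; destruct (excluded_middle_informative _) as [H|H]; [|discriminate].
  intro E; injection E as <-. exact (proj2_sig (constructive_indefinite_description _ H)).
Qed.

Lemma lub_unique P m1 m2 : is_lub P m1 -> is_lub P m2 -> m1 = m2.
Proof. intros [A B] [C D]. apply Rle_antisym; auto. Qed.

Lemma sup_bounded P B : (exists x, P x) -> (forall x, P x -> x <= B) ->
  exists m, ER_sup P = Fin m /\ is_lub P m /\ m <= B.
Proof.
  intros Hne Hb.
  assert (Hb' : bound P) by (exists B; intros x Hx; auto).
  destruct (completeness P Hb' Hne) as [m Hm].
  exists m. unfold ER_sup; destruct (excluded_middle_informative _) as [H|H].
  - split; [|split; auto; apply Hm; intros x Hx; auto].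
    f_equal. apply lub_unique with P; auto. exact (proj2_sig (constructive_indefinite_description _ H)).
  - exfalso; apply H; eauto.
Qed.

Lemma inf_fin P m : ER_inf P = Fin m -> is_glb P m.
Proof.
  unfold ER_inf; destruct (excluded_middle_informative _) as [H|H]; [|discriminate].
  intro E; injection E as <-. exact (proj2_sig (constructive_indefinite_description _ H)).
Qed.

Lemma glb_unique P m1 m2 : is_glb P m1 -> is_glb P m2 -> m1 = m2.
Proof. intros [A B] [C D]. apply Rle_antisym; auto. Qed.

Lemma inf_bounded P : (exists x, P x) -> (forall x, P x -> 0 <= x) ->
  exists m, ER_inf P = Fin m /\ is_glb P m /\ 0 <= m.
Proof.
  intros [x0 Hx0] Hb.
  set (Q := fun y => P (- y)).
  assert (Hb' : bound Q) by (exists 0; intros y Hy; unfold Q in Hy; specialize (Hb _ Hy); lra).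
  assert (Hne : exists y, Q y) by (exists (- x0); unfold Q; rewrite Ropp_involutive; auto).
  destruct (completeness Q Hb' Hne) as [M [HM1 HM2]].
  assert (Hg : is_glb P (- M)).
  { split.
    - intros x Hx. assert (Q (-x)) by (unfold Q; rewrite Ropp_involutive; auto).
      specialize (HM1 _ H); lra.
    - intros m' Hm'. assert (M <= - m'); [|lra]. apply HM2. intros y Hy. specialize (Hm' _ Hy); lra. }
  exists (- M). unfold ER_inf; destruct (excluded_middle_informative _) as [H|H].
  - split; [|split; auto].
    + f_equal. apply glb_unique with P; auto. exact (proj2_sig (constructive_indefinite_description _ H)).
    + destruct Hg as [_ G]. apply G. auto.
  - exfalso; apply H; eauto.
Qed.

Fixpoint rsum (f : nat -> R) (N : nat) : R :=
  match N with O => 0 | S N' => rsum f N' + f N' end.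

Lemma ER_sum_Fin F g N : (forall k, (k < N)%nat -> F k = Fin (g k)) -> ER_sum F N = Fin (rsum g N).
Proof.
  induction N; intros H; simpl; auto.
  rewrite IHN by (intros; apply H; lia). rewrite H by lia. reflexivity.
Qed.

Lemma rsum_add g a b : rsum g (a + b) = rsum g a + rsum (fun i => g (a + i)%nat) b.
Proof. induction b; simpl. rewrite Nat.add_0_r; ring. rewrite Nat.add_succ_r; simpl. rewrite IHb; ring. Qed.

Lemma rsum_block g N m : rsum g (N * m) = rsum (fun k => rsum (fun i => g (k * m + i)%nat) m) N.
Proof. induction N; simpl; auto. rewrite Nat.add_comm, rsum_add, IHN. reflexivity. Qed.

Lemma rsum_le f g N : (forall k, (k < N)%nat -> f k <= g k) -> rsum f N <= rsum g N.
Proof. induction N; intros H; simpl; [lra|]. assert (f N <= g N) by (apply H; lia). assert (rsum f N <= rsum g N) by (apply IHN; intros; apply H; lia). lra. Qed.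

Lemma rsum_nonneg f N : (forall k, 0 <= f k) -> 0 <= rsum f N.
Proof. induction N; intros H; simpl; [lra|]. pose proof (H N). pose proof (IHN H). lra. Qed.


Definition Cov (E : R -> Prop) (s : R) : Prop := exists a b : nat -> R,
            (forall k, a k <= b k) /\
            (forall x, E x -> exists k, a k <= x < b k) /\
            infinite_sum (fun k => b k - a k) s.

Definition rom (E : R -> Prop) : R := match outer_measure E with Fin a => a | Inf => 0 end.

Lemma sum_le_lim f s : (forall k, 0 <= f k) -> infinite_sum f s -> forall n, sum_f_R0 f n <= s.
Proof. intros H Hs. apply growing_ineq; auto. intro n; simpl. specialize (H (S n)); lra. Qed.

Lemma rsum_sum f n : rsum f (S n) = sum_f_R0 f n.
Proof. induction n. simpl; ring. change (rsum f (S (S n))) with (rsum f (S n) + f (S n)). rewrite IHn. reflexivity. Qed.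

Lemma rsum_le_lim f s : (forall k, 0 <= f k) -> infinite_sum f s -> forall n, rsum f n <= s.
Proof.
  intros H Hs n. destruct n.
  - simpl. pose proof (sum_le_lim f s H Hs 0). simpl in H0. specialize (H 0%nat). lra.
  - rewrite rsum_sum. apply sum_le_lim; auto.
Qed.

Lemma Cov_nonneg E s : Cov E s -> 0 <= s.
Proof.
  intros [a [b [H1 [_ H3]]]]. pose proof (sum_le_lim (fun k => b k - a k) s) as G.
  assert (forall k, 0 <= b k - a k) by (intro k; specialize (H1 k); lra).
  specialize (G H H3 0%nat). simpl in G. specialize (H 0%nat). lra.
Qed.

Lemma Cov_single E lo hi : lo <= hi -> (forall x, E x -> lo <= x < hi) -> Cov E (hi - lo).
Proof.
  intros Hl HE.
  exists (fun k => if Nat.eqb k 0 then lo else 0), (fun k => if Nat.eqb k 0 then hi else 0).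
  split; [intro k; destruct (Nat.eqb k 0); lra|]. split.
  - intros x Hx. exists 0%nat. simpl. apply HE; auto.
  - assert (Hc : forall n, sum_f_R0 (fun k => (if Nat.eqb k 0 then hi else 0) - (if Nat.eqb k 0 then lo else 0)) n = hi - lo).
    { induction n; simpl; auto. rewrite IHn. ring. }
    intros eps Heps. exists 0%nat. intros n _. rewrite Hc. unfold Rdist. rewrite Rminus_diag, Rabs_R0. lra.
Qed.

Lemma om_bnd E lo hi : lo <= hi -> (forall x, E x -> lo <= x < hi) ->
  outer_measure E = Fin (rom E) /\ 0 <= rom E <= hi - lo /\ is_glb (Cov E) (rom E).
Proof.
  intros Hl HE.
  destruct (inf_bounded (Cov E)) as [m [Hm1 [Hm2 Hm3]]].
  - exists (hi - lo). apply Cov_single; auto.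
  - apply Cov_nonneg.
  - unfold rom. unfold outer_measure. fold (Cov E). rewrite Hm1.
    split; [reflexivity|]. split; [split; [auto|]|exact Hm2].
    destruct Hm2 as [G _]; apply G; apply Cov_single; auto.
Qed.

Lemma om_mono E1 E2 lo hi : lo <= hi -> (forall x, E2 x -> lo <= x < hi) ->
  (forall x, E1 x -> E2 x) -> rom E1 <= rom E2.
Proof.
  intros Hl H2 H12.
  destruct (om_bnd E1 lo hi) as [_ [_ [G1 _]]]; auto.
  destruct (om_bnd E2 lo hi) as [_ [_ [_ G2]]]; auto.
  apply G2. intros s [a [b [A [B C]]]]. apply G1. exists a, b. repeat split; auto.
Qed.

Lemma om_ext E1 E2 : (forall x, E1 x <-> E2 x) -> rom E1 = rom E2.
Proof. intro H. rewrite (set_ext E1 E2 H). reflexivity. Qed.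

Fixpoint lsum (l : list (R*R)) : R := match l with nil => 0 | cd :: l' => (snd cd - fst cd) + lsum l' end.

Lemma lsum_app l1 l2 : lsum (l1 ++ l2) = lsum l1 + lsum l2.
Proof. induction l1; simpl; [ring|]. rewrite IHl1; ring. Qed.

Lemma lsum_nonneg l : (forall cd, In cd l -> fst cd <= snd cd) -> 0 <= lsum l.
Proof. induction l; simpl; intros H; [lra|]. assert (fst a <= snd a) by auto. assert (0 <= lsum l) by auto. lra. Qed.

Lemma fin_cover : forall n (l : list (R*R)) p q, (length l <= n)%nat ->
  (forall cd, In cd l -> fst cd <= snd cd) ->
  (forall z, p <= z <= q -> exists cd, In cd l /\ fst cd < z < snd cd) -> q - p <= lsum l.
Proof.
  induction n; intros l p q Hlen Hnn Hcov.
  - destruct (Rle_lt_dec p q) as [Hpq|Hpq].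
    + destruct (Hcov q) as [cd [Hin _]]; [lra|]. destruct l; simpl in *; [contradiction|lia].
    + pose proof (lsum_nonneg l Hnn); lra.
  - destruct (Rle_lt_dec p q) as [Hpq|Hpq]; [|pose proof (lsum_nonneg l Hnn); lra].
    destruct (Hcov q) as [[c d] [Hin Hq]]; [lra|]. simpl in Hq.
    destruct (in_split _ _ Hin) as [l1 [l2 ->]].
    rewrite lsum_app. simpl.
    assert (Hnn' : forall cd, In cd (l1 ++ l2) -> fst cd <= snd cd).
    { intros cd Hcd. apply Hnn. apply in_app_or in Hcd. apply in_or_app. simpl. tauto. }
    pose proof (lsum_nonneg _ Hnn') as G. rewrite lsum_app in G.
    destruct (Rlt_le_dec c p) as [Hcp|Hcp].
    + pose proof (lsum_nonneg l1) as G1. pose proof (lsum_nonneg l2) as G2.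
      assert (0 <= lsum l1 + lsum l2) by lra. lra.
    + assert (IH : c - p <= lsum (l1 ++ l2)).
      { apply IHn; auto.
        - rewrite app_length in *. simpl in Hlen. lia.
        - intros z Hz. destruct (Hcov z) as [cd [Hcd Hz']]; [lra|].
          exists cd. split; auto. apply in_app_or in Hcd. destruct Hcd as [Hcd|[Hcd|Hcd]].
          + apply in_or_app; auto.
          + subst cd. simpl in Hz'. lra.
          + apply in_or_app; auto. }
      rewrite lsum_app in IH. lra.
Qed.


Lemma compact_cover (a b e : nat -> R) x z0 : x <= z0 -> (forall k, 0 < e k) ->
  (forall w, x <= w <= z0 -> exists k, a k <= w < b k) ->
  exists N, forall w, x <= w <= z0 -> exists k, (k < N)%nat /\ a k - e k < w < b k.
Proof.
  intros Hx He Hc.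
  set (S := fun z => x <= z <= z0 /\ exists N, forall w, x <= w <= z -> exists k, (k < N)%nat /\ a k - e k < w < b k).
  assert (HSx : S x).
  { split; [lra|]. destruct (Hc x) as [k0 Hk0]; [lra|]. exists (Datatypes.S k0). intros w Hw.
    exists k0. split; [lia|]. specialize (He k0). assert (w = x) by lra. subst. lra. }
  assert (Hb : bound S) by (exists z0; intros z [Hz _]; lra).
  destruct (completeness S Hb (ex_intro _ x HSx)) as [m [Hm1 Hm2]].
  assert (Hxm : x <= m) by (apply Hm1; auto).
  assert (Hmz : m <= z0) by (apply Hm2; intros z [Hz _]; lra).
  destruct (Hc m) as [j Hj]; [lra|].
  assert (Hz : exists z, S z /\ a j - e j < z).
  { apply NNPP. intro Hn. assert (m <= a j - e j).
    { apply Hm2. intros z Hz. destruct (Rle_lt_dec z (a j - e j)); auto. exfalso; apply Hn; eauto. }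
    specialize (He j). lra. }
  destruct Hz as [z [[Hz1 [N HN]] Hz2]].
  set (w := Rmin z0 ((m + b j) / 2)).
  assert (HSw : S w).
  { split.
    - unfold w. apply Rmin_case_strong; intros; lra.
    - exists (Nat.max N (Datatypes.S j)). intros w' Hw'.
      destruct (Rle_lt_dec w' z).
      + destruct (HN w') as [k [Hk1 Hk2]]; [lra|]. exists k. split; auto. lia.
      + exists j. split; [lia|]. assert (w <= (m + b j)/2) by (unfold w; apply Rmin_r). lra. }
  assert (Hwm : w <= m) by (apply Hm1; auto).
  assert (Hw : w = z0).
  { unfold w in *. revert Hwm. apply Rmin_case_strong; intros; lra. }
  rewrite <- Hw. destruct HSw as [_ HSw]. exact HSw.
Qed.

Lemma rsum_geom eps N : rsum (fun k => eps / 2 ^ (Datatypes.S k)) N = eps * (1 - / 2 ^ N).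
Proof.
  induction N; [simpl; field|]. cbn [rsum]. rewrite IHN. simpl. field. apply pow_nonzero; lra.
Qed.

Lemma lsum_map (f g : nat -> R) N : lsum (map (fun k => (f k, g k)) (seq 0 N)) = rsum (fun k => g k - f k) N.
Proof.
  induction N; [simpl; auto|]. rewrite seq_S, map_app, lsum_app, IHN. cbn [rsum]. simpl. ring.
Qed.

Lemma Cov_interval_lb x L s : 0 <= L -> Cov (Ixy x L) s -> L <= s.
Proof.
  intros HL Hs. pose proof (Cov_nonneg _ _ Hs) as Hs0.
  destruct Hs as [a [b [Hab [Hcov Hsum]]]].
  assert (Heps : forall eps, 0 < eps -> L <= s + 2 * eps).
  { intros eps Heps. destruct (Rle_lt_dec L eps); [lra|].
    set (e := fun k => eps / 2 ^ (Datatypes.S k)).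
    assert (He : forall k, 0 < e k) by (intro k; unfold e; apply Rdiv_lt_0_compat; [lra|apply pow_lt; lra]).
    destruct (compact_cover a b e x (x + L - eps)) as [N HN]; auto; [lra| |].
    { intros w Hw. apply Hcov. unfold Ixy. lra. }
    pose proof (fin_cover (length (map (fun k => (a k - e k, b k)) (seq 0 N)))
                  (map (fun k => (a k - e k, b k)) (seq 0 N)) x (x + L - eps) (le_n _)) as G.
    rewrite lsum_map in G.
    assert (G2 : x + L - eps - x <= rsum (fun k => b k - (a k - e k)) N).
    { apply G.
      - intros cd Hcd. apply in_map_iff in Hcd. destruct Hcd as [k [<- _]]. simpl.
        specialize (Hab k); specialize (He k); lra.
      - intros z Hz. destruct (HN z Hz) as [k [Hk1 Hk2]]. exists (a k - e k, b k). split; auto.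
        apply in_map_iff. exists k. split; auto. apply in_seq. lia. }
    assert (G3 : rsum (fun k => b k - (a k - e k)) N = rsum (fun k => b k - a k) N + rsum e N).
    { clear. induction N; simpl; [ring|]. rewrite IHN. ring. }
    assert (G4 : rsum (fun k => b k - a k) N <= s).
    { apply rsum_le_lim; auto. intro k; specialize (Hab k); lra. }
    assert (G5 : rsum e N <= eps).
    { unfold e. rewrite rsum_geom. assert (0 < / 2 ^ N) by (apply Rinv_0_lt_compat, pow_lt; lra). nra. }
    lra. }
  destruct (Rle_lt_dec L s); auto.
  specialize (Heps ((L - s) / 4)). lra.
Qed.

Lemma rom_interval x L : 0 <= L -> rom (Ixy x L) = L.
Proof.
  intro HL. destruct (om_bnd (Ixy x L) x (x + L)) as [_ [_ [G1 G2]]]; [lra|unfold Ixy; intros; lra|].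
  apply Rle_antisym.
  - replace L with (x + L - x) at 2 by ring. apply G1. apply Cov_single; [lra|unfold Ixy; intros; lra].
  - apply G2. intros s Hs. apply Cov_interval_lb with x; auto.
Qed.


Lemma om_split_c E lo hi c : lo <= hi -> (forall x, E x -> lo <= x < hi) ->
  rom (fun x => E x /\ x < c) + rom (fun x => E x /\ c <= x) <= rom E.
Proof.
  intros Hl HE.
  destruct (om_bnd E lo hi) as [_ [_ [_ G]]]; auto.
  destruct (om_bnd (fun x => E x /\ x < c) lo hi) as [_ [_ [G1 _]]]; auto; [intros x [Hx _]; auto|].
  destruct (om_bnd (fun x => E x /\ c <= x) lo hi) as [_ [_ [G2 _]]]; auto; [intros x [Hx _]; auto|].
  apply G. intros s [a [b [Hab [Hcov Hs]]]].
  set (m := fun k => Rmax (a k) (Rmin (b k) c)).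
  assert (Hm1 : forall k, a k <= m k) by (intro k; apply Rmax_l).
  assert (Hm2 : forall k, m k <= b k).
  { intro k. unfold m. apply Rmax_lub; [apply Hab|apply Rmin_l]. }
  assert (Hgr : Un_growing (fun n => sum_f_R0 (fun k => m k - a k) n)).
  { intro n; simpl. specialize (Hm1 (S n)); lra. }
  assert (Hub : has_ub (fun n => sum_f_R0 (fun k => m k - a k) n)).
  { exists s. intros r [n ->].
    apply Rle_trans with (sum_f_R0 (fun k => b k - a k) n).
    - apply sum_Rle. intros k _. specialize (Hm2 k); lra.
    - apply sum_le_lim; auto. intro k; specialize (Hab k); lra. }
  destruct (growing_cv _ Hgr Hub) as [s1 Hs1].
  assert (Hs2 : infinite_sum (fun k => b k - m k) (s - s1)).
  { change (Un_cv (fun n => sum_f_R0 (fun k => b k - m k) n) (s - s1)).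
    replace (fun n => sum_f_R0 (fun k => b k - m k) n)
      with (fun n => sum_f_R0 (fun k => b k - a k) n - sum_f_R0 (fun k => m k - a k) n).
    - exact (CV_minus (fun n => sum_f_R0 (fun k => b k - a k) n) _ s s1 Hs Hs1).
    - apply functional_extensionality; intro n. rewrite <- minus_sum. apply sum_eq. intros; ring. }
  assert (s1 >= rom (fun x => E x /\ x < c)).
  { apply Rle_ge, G1. exists a, m. split; auto. split; auto.
    intros x [Hx Hxc]. destruct (Hcov x Hx) as [k Hk]. exists k. split; [lra|].
    unfold m. apply Rlt_le_trans with (Rmin (b k) c); [|apply Rmax_r].
    apply Rmin_glb_lt; lra. }
  assert (s - s1 >= rom (fun x => E x /\ c <= x)).
  { apply Rle_ge, G2. exists m, b. split; auto. split; auto.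
    intros x [Hx Hxc]. destruct (Hcov x Hx) as [k Hk]. exists k. split; [|lra].
    unfold m. apply Rmax_lub; [lra|]. apply Rle_trans with c; [apply Rmin_r|lra]. }
  lra.
Qed.

Lemma cara h t A lo hi : measurable_on_Rplus h -> 0 <= lo <= hi -> (forall x, A x -> lo <= x < hi) ->
  rom A = rom (fun x => A x /\ t < h x) + rom (fun x => A x /\ ~ t < h x).
Proof.
  intros Hm Hl HA.
  pose proof (Hm t A) as E. unfold lebesgue_measurable in E.
  rewrite (set_ext (fun x => A x /\ 0 <= x /\ t < h x) (fun x => A x /\ t < h x)) in E.
  2:{ intro x; split; [tauto|]. intros [Ha Hb]. specialize (HA x Ha). repeat split; auto; lra. }
  rewrite (set_ext (fun x => A x /\ ~ (0 <= x /\ t < h x)) (fun x => A x /\ ~ t < h x)) in E.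
  2:{ intro x; split; intros [Ha Hb]; split; auto; specialize (HA x Ha); intro; apply Hb; try split; try tauto; lra. }
  destruct (om_bnd A lo hi) as [E0 _]; [lra|auto|].
  destruct (om_bnd (fun x => A x /\ t < h x) lo hi) as [E1 _]; [lra|intros x [Hx _]; auto|].
  destruct (om_bnd (fun x => A x /\ ~ t < h x) lo hi) as [E2 _]; [lra|intros x [Hx _]; auto|].
  rewrite E0, E1, E2 in E. simpl in E. injection E; auto.
Qed.


Definition rdist (X : R -> Prop) (f : R -> ER) (t : R) : R := rom (fun x => X x /\ ER_lt (Fin t) (f x)).
Definition RS X f n N := rsum (fun k => / INR (S n) * rdist X f (INR (S k) / INR (S n))) N.
Definition rint X f := match integral X f with Fin a => a | Inf => 0 end.
Definition bnd (X : R -> Prop) lo hi := lo <= hi /\ forall x, X x -> lo <= x < hi.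

Lemma dist_fin X f t lo hi : bnd X lo hi -> distribution X f t = Fin (rdist X f t) /\ 0 <= rdist X f t.
Proof.
  intros [Hl HX]. destruct (om_bnd (fun x => X x /\ ER_lt (Fin t) (f x)) lo hi) as [E [H _]];
    [auto|intros x [Hx _]; auto|]. split; [exact E|apply H].
Qed.

Lemma rdist_nonneg X f t lo hi : bnd X lo hi -> 0 <= rdist X f t.
Proof. intro H; apply (dist_fin X f t lo hi H). Qed.

Lemma int_eq X f lo hi : bnd X lo hi -> integral X f = ER_sup (fun s => exists n N, s <= RS X f n N).
Proof.
  intro Hb. unfold integral. f_equal. apply set_ext. intro s.
  assert (E : forall n N, ER_sum (fun k => ER_mult (Fin (/ INR (S n))) (distribution X f (INR (S k) / INR (S n)))) N = Fin (RS X f n N)).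
  { intros n N. apply ER_sum_Fin. intros k _. destruct (dist_fin X f (INR (S k) / INR (S n)) lo hi Hb) as [-> _]. reflexivity. }
  split; intros [n [N H]]; exists n, N; [rewrite E in H; exact H|rewrite E; exact H].
Qed.

Lemma rdist_anti X f t1 t2 lo hi : bnd X lo hi -> t1 <= t2 -> rdist X f t2 <= rdist X f t1.
Proof.
  intros [Hl HX] Ht. unfold rdist. apply om_mono with lo hi; auto.
  - intros x [Hx _]; auto.
  - intros x [Hx H]. split; auto. destruct (f x); simpl in *; lra.
Qed.

Lemma RS_nonneg X f n N lo hi : bnd X lo hi -> 0 <= RS X f n N.
Proof.
  intro Hb. apply rsum_nonneg. intro k. apply Rmult_le_pos.
  - apply Rlt_le, Rinv_0_lt_compat, lt_0_INR; lia.
  - apply (rdist_nonneg X f _ lo hi Hb).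
Qed.

Lemma RS_monoN X f n N M lo hi : bnd X lo hi -> (N <= M)%nat -> RS X f n N <= RS X f n M.
Proof.
  intros Hb HNM. induction HNM; [lra|]. unfold RS in *. cbn [rsum].
  assert (0 <= / INR (S n) * rdist X f (INR (S m) / INR (S n))); [|lra].
  apply Rmult_le_pos; [apply Rlt_le, Rinv_0_lt_compat, lt_0_INR; lia|apply (rdist_nonneg X f _ lo hi Hb)].
Qed.

Lemma rsum_const c N : rsum (fun _ => c) N = INR N * c.
Proof. induction N; [simpl; ring|]. cbn [rsum]. rewrite IHN, S_INR. ring. Qed.

Lemma RS_refine X f n p n' N lo hi : bnd X lo hi -> S n' = (S n * S p)%nat ->
  RS X f n N <= RS X f n' (N * S p).
Proof.
  intros Hb Hn'. unfold RS. rewrite rsum_block. apply rsum_le. intros k Hk.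
  set (q := INR (S n)). set (P := INR (S p)).
  assert (Hq : 0 < q) by (apply lt_0_INR; lia). assert (HP : 0 < P) by (apply lt_0_INR; lia).
  assert (Hqp : INR (S n') = q * P) by (rewrite Hn', mult_INR; reflexivity).
  rewrite Hqp.
  replace (/ q * rdist X f (INR (S k) / q)) with (rsum (fun _ => / (q * P) * rdist X f (INR (S k) / q)) (S p)).
  2:{ rewrite rsum_const. fold P. field. lra. }
  apply rsum_le. intros i Hi. apply Rmult_le_compat_l.
  - apply Rlt_le, Rinv_0_lt_compat; nra.
  - apply rdist_anti with lo hi; auto.
    assert (Hle : INR (S (k * S p + i)) <= INR (S k) * P).
    { unfold P. rewrite <- mult_INR. apply le_INR. nia. }
    apply Rmult_le_reg_r with (q * P); [nra|].
    unfold Rdiv. replace (INR (S k) * / q * (q * P)) with (INR (S k) * P) by (field; lra).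
    replace (INR (S (k * S p + i)) * / (q * P) * (q * P)) with (INR (S (k * S p + i))) by (field; lra).
    exact Hle.
Qed.

Lemma int_nonneg X f lo hi F : bnd X lo hi -> integral X f = Fin F -> 0 <= F.
Proof.
  intros Hb E. rewrite (int_eq X f lo hi Hb) in E. apply sup_fin in E. destruct E as [E _].
  apply E. exists 0%nat, 0%nat. unfold RS; simpl; lra.
Qed.

Lemma int_split X X1 X2 f lo hi F : bnd X lo hi -> bnd X1 lo hi -> bnd X2 lo hi ->
  (forall t, rdist X1 f t + rdist X2 f t <= rdist X f t) ->
  integral X f = Fin F ->
  integral X1 f = Fin (rint X1 f) /\ integral X2 f = Fin (rint X2 f) /\ rint X1 f + rint X2 f <= F.
Proof.
  intros Hb Hb1 Hb2 Hd E.
  rewrite (int_eq X f lo hi Hb) in E. apply sup_fin in E. destruct E as [Eu _].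
  assert (HF : forall n N, RS X f n N <= F) by (intros n N; apply Eu; exists n, N; lra).
  assert (Hs : forall n N, RS X1 f n N + RS X2 f n N <= RS X f n N).
  { intros n N. unfold RS. induction N; [simpl; lra|]. cbn [rsum].
    pose proof (Hd (INR (S N) / INR (S n))).
    assert (0 < / INR (S n)) by (apply Rinv_0_lt_compat, lt_0_INR; lia). nra. }
  assert (H1 : forall n N, RS X1 f n N <= F).
  { intros n N. pose proof (Hs n N). pose proof (HF n N). pose proof (RS_nonneg X2 f n N lo hi Hb2). lra. }
  assert (H2 : forall n N, RS X2 f n N <= F).
  { intros n N. pose proof (Hs n N). pose proof (HF n N). pose proof (RS_nonneg X1 f n N lo hi Hb1). lra. }
  destruct (sup_bounded (fun s => exists n N, s <= RS X1 f n N) F) as [m1 [E1 [L1 _]]].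
  { exists 0; exists 0%nat, 0%nat; unfold RS; simpl; lra. }
  { intros x [n [N Hx]]. specialize (H1 n N). lra. }
  destruct (sup_bounded (fun s => exists n N, s <= RS X2 f n N) F) as [m2 [E2 [L2 _]]].
  { exists 0; exists 0%nat, 0%nat; unfold RS; simpl; lra. }
  { intros x [n [N Hx]]. specialize (H2 n N). lra. }
  unfold rint. rewrite (int_eq X1 f lo hi Hb1), (int_eq X2 f lo hi Hb2), E1, E2.
  split; [reflexivity|split; [reflexivity|]].
  assert (Hpair : forall s1 s2, (exists n N, s1 <= RS X1 f n N) -> (exists n N, s2 <= RS X2 f n N) -> s1 + s2 <= F).
  { intros s1 s2 [n1 [N1 Hs1]] [n2 [N2 Hs2]].
    set (n' := ((S n1 * S n2) - 1)%nat).
    assert (Hn1 : S n' = (S n1 * S n2)%nat) by (unfold n'; nia).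
    assert (Hn2 : S n' = (S n2 * S n1)%nat) by (unfold n'; nia).
    set (M := (N1 * S n2 + N2 * S n1)%nat).
    pose proof (RS_refine X1 f n1 n2 n' N1 lo hi Hb1 Hn1).
    pose proof (RS_refine X2 f n2 n1 n' N2 lo hi Hb2 Hn2).
    pose proof (RS_monoN X1 f n' (N1 * S n2) M lo hi Hb1 ltac:(unfold M; lia)).
    pose proof (RS_monoN X2 f n' (N2 * S n1) M lo hi Hb2 ltac:(unfold M; lia)).
    pose proof (Hs n' M). pose proof (HF n' M). lra. }
  destruct L1 as [U1 B1]. destruct L2 as [U2 B2].
  assert (m1 <= F - m2); [|lra].
  apply B1. intros s1 Hs1. assert (m2 <= F - s1); [|lra].
  apply B2. intros s2 Hs2. pose proof (Hpair s1 s2 Hs1 Hs2). lra.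
Qed.

Lemma rat_between r c : 0 <= r < c -> exists n N, r < INR N / INR (S n) < c.
Proof.
  intros [Hr Hc]. destruct (archimed_cor1 (c - r)) as [q [Hq1 Hq2]]; [lra|].
  destruct q as [|n]; [lia|].
  assert (Hq : 0 < INR (S n)) by (apply lt_0_INR; lia).
  destruct (archimed (r * INR (S n))) as [A1 A2].
  set (z := up (r * INR (S n))) in *.
  assert (Hz : (0 <= z)%Z).
  { apply le_IZR. assert (0 <= r * INR (S n)) by nra. lra. }
  exists n, (Z.to_nat z). rewrite INR_IZR_INZ, Z2Nat.id by exact Hz.
  split.
  - apply Rmult_lt_reg_r with (INR (S n)); auto. unfold Rdiv. rewrite Rmult_assoc, Rinv_l by lra. lra.
  - apply Rmult_lt_reg_r with (INR (S n)); auto. unfold Rdiv. rewrite Rmult_assoc, Rinv_l by lra.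
    assert (/ INR (S n) * INR (S n) = 1) by (field; lra).
    assert (1 < (c - r) * INR (S n)).
    { apply Rmult_lt_compat_r with (r := INR (S n)) in Hq1; auto. rewrite Rinv_l in Hq1 by lra. lra. }
    nra.
Qed.

Lemma cheb Y f c F lo hi : bnd Y lo hi -> 0 <= c ->
  (forall x, Y x -> forall r, r < c -> ER_lt (Fin r) (f x)) ->
  integral Y f = Fin F -> c * rom Y <= F.
Proof.
  intros Hb Hc Hf E.
  pose proof (int_nonneg Y f lo hi F Hb E) as HF0.
  rewrite (int_eq Y f lo hi Hb) in E. apply sup_fin in E. destruct E as [Eu _].
  destruct Hb as [Hl HY].
  assert (Hm0 : 0 <= rom Y) by (destruct (om_bnd Y lo hi) as [_ [[G _] _]]; auto).
  assert (Hk : forall n N, INR N / INR (S n) < c -> INR N / INR (S n) * rom Y <= F).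
  { intros n N HN. apply Rle_trans with (RS Y f n N); [|apply Eu; exists n, N; lra].
    assert (Hq : 0 < INR (S n)) by (apply lt_0_INR; lia).
    apply Rle_trans with (rsum (fun _ => / INR (S n) * rom Y) N).
    - rewrite rsum_const. unfold Rdiv. lra.
    - apply rsum_le. intros k Hk. apply Rmult_le_compat_l; [apply Rlt_le, Rinv_0_lt_compat; lra|].
      unfold rdist. apply om_mono with lo hi; auto.
      + intros x [Hx _]; auto.
      + intros x Hx. split; auto. apply Hf; auto.
        apply Rle_lt_trans with (INR N / INR (S n)); auto.
        unfold Rdiv. apply Rmult_le_compat_r; [apply Rlt_le, Rinv_0_lt_compat; lra|]. apply le_INR; lia. }
  destruct (Rle_lt_dec (c * rom Y) F); auto. exfalso.
  assert (Hm : 0 < rom Y) by (destruct (Rle_lt_dec (rom Y) 0); nra).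
  destruct (rat_between (F / rom Y) c) as [n [N [HN1 HN2]]].
  { split. unfold Rdiv; apply Rmult_le_pos; [lra|apply Rlt_le, Rinv_0_lt_compat; lra]. apply Rmult_lt_reg_r with (rom Y); auto. unfold Rdiv. rewrite Rmult_assoc, Rinv_l by lra. lra. }
  specialize (Hk n N HN2).
  apply Rmult_lt_compat_r with (r := rom Y) in HN1; auto. unfold Rdiv in HN1. rewrite Rmult_assoc, Rinv_l in HN1 by lra. lra.
Qed.


Lemma amgm x y k : 0 < x -> 0 < y -> 0 <= k -> x * y = k * k -> 2 * k <= x + y.
Proof. intros Hx Hy Hk E. pose proof (Rle_0_sqr (x-y)). unfold Rsqr in *. nra. Qed.

Lemma dCS (w u v : nat -> R) kk N : 0 <= kk ->
  (forall i, 0 <= w i /\ 0 < u i /\ 0 < v i /\ u i * v i = kk) ->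
  kk * (rsum w N * rsum w N) <= rsum (fun i => w i * u i) N * rsum (fun i => w i * v i) N.
Proof.
  intros Hkk H.
  assert (Sub : forall j M, 2 * kk * rsum w M <= u j * rsum (fun i => w i * v i) M + v j * rsum (fun i => w i * u i) M).
  { intros j M. induction M; [simpl; lra|]. cbn [rsum].
    destruct (H j) as [_ [Hu [Hv Huv]]]. destruct (H M) as [Hw [Hu' [Hv' Huv']]].
    assert (2 * kk <= u j * v M + v j * u M).
    { apply amgm; [apply Rmult_lt_0_compat; auto|apply Rmult_lt_0_compat; auto|auto|]. 
      transitivity ((u j * v j) * (u M * v M)); [ring|]. rewrite Huv, Huv'. ring. }
    assert (w M * (2 * kk) <= w M * (u j * v M + v j * u M)) by (apply Rmult_le_compat_l; auto). nra. }
  induction N; [simpl; lra|]. cbn [rsum].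
  destruct (H N) as [Hw [Hu [Hv Huv]]].
  pose proof (Sub N N) as S1.
  assert (w N * (2 * kk * rsum w N) <= w N * (u N * rsum (fun i => w i * v i) N + v N * rsum (fun i => w i * u i) N))
    by (apply Rmult_le_compat_l; auto).
  assert (w N * u N * (w N * v N) = kk * (w N * w N)) by (replace (w N * u N * (w N * v N)) with (w N * w N * (u N * v N)) by ring; rewrite Huv; ring).
  nra.
Qed.

Lemma chain_le (g G : nat -> R) : (forall i, g i + G (S i) <= G i) -> forall N, rsum g N + G N <= G 0%nat.
Proof. intros H N. induction N; [simpl; lra|]. cbn [rsum]. specialize (H N). lra. Qed.

Lemma chain_eq (g G : nat -> R) : (forall i, G i = g i + G (S i)) -> forall N, G 0%nat = rsum g N + G N.
Proof. intros H N. induction N; [simpl; lra|]. cbn [rsum]. specialize (H N). lra. Qed.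


Lemma limit_arg A B L : 0 <= A -> 0 <= B -> 0 < L ->
  (forall c0 rho N, 0 < c0 -> 1 < rho -> exists Sm, 0 <= Sm /\ L - c0 * B - A / (c0 * rho ^ N) <= Sm /\
        / rho * (Sm * Sm) <= A * B) ->
  L * L <= A * B.
Proof.
  intros HA HB HL H.
  set (K := 4 * L + L * L).
  assert (HK : 0 < K) by (unfold K; nra).
  assert (Key : forall eps, 0 < eps <= 1/2 -> L * L - eps * K <= A * B).
  { intros eps Heps.
    set (M := (A + 1) * (B + 1) / (eps * eps)).
    destruct (INR_archimed eps M) as [N HN]; [lra|].
    pose proof (poly N eps (proj1 Heps)) as Hp.
    set (c0 := eps / (B + 1)).
    assert (Hc0 : 0 < c0) by (unfold c0; apply Rdiv_lt_0_compat; lra).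
    destruct (H c0 (1 + eps) N Hc0 ltac:(lra)) as [Sm [HS0 [HS1 HS2]]].
    assert (Hr : M < (1 + eps) ^ N) by lra.
    assert (HrN : 0 < (1 + eps) ^ N) by (apply pow_lt; lra).
    assert (E1 : c0 * B <= eps).
    { unfold c0. unfold Rdiv. apply Rle_trans with (eps * (B * / (B + 1))); [right; ring|].
      assert (B * / (B + 1) <= 1).
      { apply Rmult_le_reg_r with (B + 1); [lra|]. rewrite Rmult_assoc, Rinv_l by lra. lra. }
      nra. }
    assert (E2 : A / (c0 * (1 + eps) ^ N) <= eps).
    { assert (Hpos : 0 < c0 * (1 + eps) ^ N) by nra.
      apply Rmult_le_reg_r with (c0 * (1 + eps) ^ N); auto.
      unfold Rdiv. rewrite Rmult_assoc, Rinv_l by lra. rewrite Rmult_1_r.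
      assert (HM : eps * eps * M = (A + 1) * (B + 1)) by (unfold M; field; lra).
      assert (Hc : c0 * (B + 1) = eps) by (unfold c0; field; lra).
      assert (eps * (c0 * M) = A + 1).
      { apply Rmult_eq_reg_r with (B + 1); [|lra].
        transitivity (eps * eps * M * ((c0 * (B + 1)) / eps)); [field; lra|]. rewrite HM, Hc. field; lra. }
      assert (eps * c0 * M <= eps * c0 * (1 + eps) ^ N).
      { apply Rmult_le_compat_l; [nra|lra]. }
      nra. }
    destruct (Rle_lt_dec (2 * eps) L) as [HL2|HL2].
    - assert (HS : L - 2 * eps <= Sm) by lra.
      assert (HSq : (L - 2 * eps) * (L - 2 * eps) <= Sm * Sm) by (apply Rmult_le_compat; lra).
      assert (Hinv : 1 - eps <= / (1 + eps)).
      { apply Rmult_le_reg_r with (1 + eps); [lra|]. rewrite Rinv_l by lra. nra. }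
      assert ((1 - eps) * ((L - 2 * eps) * (L - 2 * eps)) <= / (1 + eps) * (Sm * Sm)).
      { apply Rmult_le_compat; try nra. }
      unfold K. nra.
    - assert (0 <= A * B) by nra. unfold K. nra. }
  destruct (Rle_lt_dec (L * L) (A * B)) as [G|G]; auto.
  set (eps := Rmin (1/2) ((L * L - A * B) / (2 * K))).
  assert (He1 : 0 < eps).
  { unfold eps. apply Rmin_case_strong; intros; [lra|]. apply Rdiv_lt_0_compat; lra. }
  assert (He2 : eps <= 1/2) by (unfold eps; apply Rmin_l).
  assert (He3 : eps * K <= (L * L - A * B) / 2).
  { apply Rle_trans with ((L * L - A * B) / (2 * K) * K).
    - apply Rmult_le_compat_r; [lra|unfold eps; apply Rmin_r].
    - right. field. lra. }
  specialize (Key eps (conj He1 He2)). lra.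
Qed.


Definition upS (h : R -> R) (Z : R -> Prop) c := fun y => Z y /\ c < h y.
Definition lowS (h : R -> R) (Z : R -> Prop) c := fun y => Z y /\ ~ c < h y.

Lemma bnd_up h Z c lo hi : bnd Z lo hi -> bnd (upS h Z c) lo hi.
Proof. intros [H1 H2]; split; auto. intros y [Hy _]; auto. Qed.
Lemma bnd_low h Z c lo hi : bnd Z lo hi -> bnd (lowS h Z c) lo hi.
Proof. intros [H1 H2]; split; auto. intros y [Hy _]; auto. Qed.

Lemma GS_rom h Z c lo hi : measurable_on_Rplus h -> 0 <= lo -> bnd Z lo hi ->
  rom Z = rom (upS h Z c) + rom (lowS h Z c).
Proof. intros Hm Hlo [H1 H2]. apply cara with lo hi; auto. Qed.

Lemma GS_dist h Z c lo hi f : measurable_on_Rplus h -> 0 <= lo -> bnd Z lo hi ->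
  forall t, rdist (upS h Z c) f t + rdist (lowS h Z c) f t <= rdist Z f t.
Proof.
  intros Hm Hlo [H1 H2] t. unfold rdist.
  rewrite (cara h c (fun x => Z x /\ ER_lt (Fin t) (f x)) lo hi Hm); [| lra | intros x [Hx _]; auto].
  right. f_equal; apply om_ext; intro y; unfold upS, lowS; tauto.
Qed.

Lemma GS_int h Z c lo hi f F : measurable_on_Rplus h -> 0 <= lo -> bnd Z lo hi ->
  integral Z f = Fin F ->
  integral (upS h Z c) f = Fin (rint (upS h Z c) f) /\ integral (lowS h Z c) f = Fin (rint (lowS h Z c) f) /\
  rint (upS h Z c) f + rint (lowS h Z c) f <= F.
Proof.
  intros Hm Hlo Hb E. apply (int_split Z _ _ f lo hi F); auto.
  - apply bnd_up; auto.
  - apply bnd_low; auto.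
  - apply (GS_dist h Z c lo hi f); auto.
Qed.

Lemma rint_fin X f : integral X f = Fin (rint X f) -> forall F, integral X f = Fin F -> F = rint X f.
Proof. intros E F E'. rewrite E in E'. injection E'; auto. Qed.

Lemma CS_approx (h : R -> R) (Hm : measurable_on_Rplus h) (Hh : forall y, 0 <= y -> 0 <= h y)
  (x L A B : R) (Hx : 0 <= x) (HL : 0 < L)
  (HA : integral (Ixy x L) (ER_of h) = Fin A) (HB : integral (Ixy x L) (ER_inv h) = Fin B) :
 forall c0 rho N, 0 < c0 -> 1 < rho -> exists Sm, 0 <= Sm /\ L - c0 * B - A / (c0 * rho ^ N) <= Sm /\
        / rho * (Sm * Sm) <= A * B.
Proof.
  intros c0 rho N Hc0 Hrho.
  set (X := Ixy x L).
  assert (bX : bnd X x (x + L)) by (split; [lra|]; unfold X, Ixy; intros; lra).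
  set (c := fun i => c0 * rho ^ i).
  assert (Hcpos : forall i, 0 < c i) by (intro i; unfold c; apply Rmult_lt_0_compat; auto; apply pow_lt; lra).
  assert (Hcinc : forall i, c i <= c (S i)).
  { intro i; unfold c; simpl. assert (0 < rho ^ i) by (apply pow_lt; lra).
    assert (rho ^ i <= rho * rho ^ i) by (rewrite <- (Rmult_1_l (rho ^ i)) at 1; apply Rmult_le_compat_r; lra).
    apply Rmult_le_compat_l; lra. }
  set (U := fun i => upS h X (c i)).
  set (band := fun i => lowS h (U i) (c (S i))).
  set (low0 := lowS h X (c 0%nat)).
  assert (bU : forall i, bnd (U i) x (x + L)) by (intro i; apply bnd_up; exact bX).
  assert (bband : forall i, bnd (band i) x (x + L)) by (intro i; apply bnd_low; auto).
  assert (blow : bnd low0 x (x + L)) by (apply bnd_low; exact bX).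
  assert (f1 : forall i, upS h (U i) (c (S i)) = U (S i)).
  { intro i. apply set_ext. intro y. unfold U, upS. specialize (Hcinc i). split; [tauto|].
    intros [Hy Hc]. split; [split; [exact Hy|]|exact Hc]. lra. }
  assert (chainI : forall f F, integral X f = Fin F ->
     integral low0 f = Fin (rint low0 f) /\ rint low0 f + rint (U 0%nat) f <= F /\
     (forall i, integral (U i) f = Fin (rint (U i) f)) /\
     (forall i, integral (band i) f = Fin (rint (band i) f) /\ rint (band i) f + rint (U (S i)) f <= rint (U i) f)).
  { intros f F E.
    destruct (GS_int h X (c 0%nat) x (x + L) f F Hm Hx bX E) as [E1 [E2 E3]].
    fold low0 in E2, E3. change (upS h X (c 0%nat)) with (U 0%nat) in E1, E3.
    assert (HU : forall i, integral (U i) f = Fin (rint (U i) f)).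
    { induction i; auto.
      destruct (GS_int h (U i) (c (S i)) x (x + L) f _ Hm Hx (bU i) IHi) as [G1 _].
      rewrite f1 in G1. exact G1. }
    split; auto. split; [lra|]. split; auto.
    intro i. destruct (GS_int h (U i) (c (S i)) x (x + L) f _ Hm Hx (bU i) (HU i)) as [G1 [G2 G3]].
    rewrite f1 in G3. fold (band i) in G2, G3. split; auto. lra. }
  assert (mX : L = rom low0 + rom (U 0%nat)).
  { rewrite <- (rom_interval x L) by lra. rewrite Rplus_comm. exact (GS_rom h (Ixy x L) (c 0%nat) x (x+L) Hm Hx bX). }
  assert (mU : forall i, rom (U i) = rom (band i) + rom (U (S i))).
  { intro i. rewrite <- f1. rewrite Rplus_comm. exact (GS_rom h (U i) (c (S i)) x (x+L) Hm Hx (bU i)). }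
  set (m := fun i => rom (band i)).
  assert (mnn : forall i, 0 <= m i).
  { intro i. unfold m. destruct (bband i) as [G1 G2]. destruct (om_bnd (band i) x (x+L)) as [_ [[G _] _]]; auto. }
  assert (mUN : 0 <= rom (U N)) by (destruct (bU N) as [G1 G2]; destruct (om_bnd (U N) x (x+L)) as [_ [[G _] _]]; auto).
  assert (mlow : 0 <= rom low0) by (destruct blow as [G1 G2]; destruct (om_bnd low0 x (x+L)) as [_ [[G _] _]]; auto).
  assert (Lsum : L = rom low0 + rsum m N + rom (U N)).
  { rewrite mX. pose proof (chain_eq m (fun i => rom (U i)) mU N). simpl in H. lra. }
  destruct (chainI (ER_of h) A HA) as [IA1 [IA2 [IA3 IA4]]].
  assert (Cb : forall i, m i * c i <= rint (band i) (ER_of h)).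
  { intro i. rewrite Rmult_comm. unfold m. apply (cheb (band i) (ER_of h) (c i) _ x (x + L)); auto; [apply Rlt_le; auto| |apply IA4].
    intros y [[Hy Hc] _] r Hr. simpl. lra. }
  assert (CUN : c N * rom (U N) <= rint (U N) (ER_of h)).
  { apply (cheb (U N) (ER_of h) (c N) _ x (x + L)); auto; [apply Rlt_le; auto|]. intros y [Hy Hc] r Hr. simpl. lra. }
  assert (Alow : 0 <= rint low0 (ER_of h)) by (apply (int_nonneg low0 (ER_of h) x (x + L)); auto).
  assert (Hsu : rsum (fun i => m i * c i) N + c N * rom (U N) <= A).
  { pose proof (chain_le (fun i => rint (band i) (ER_of h)) (fun i => rint (U i) (ER_of h)) (fun i => proj2 (IA4 i)) N).
    simpl in H. pose proof (rsum_le _ _ N (fun k _ => Cb k)). lra. }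
  destruct (chainI (ER_inv h) B HB) as [IB1 [IB2 [IB3 IB4]]].
  assert (Cbi : forall i, m i * / c (S i) <= rint (band i) (ER_inv h)).
  { intro i. rewrite Rmult_comm. unfold m. apply (cheb (band i) (ER_inv h) (/ c (S i)) _ x (x + L)); auto; [apply Rlt_le, Rinv_0_lt_compat; auto| |apply IB4].
    intros y [[[Hy1 Hy2] Hc] Hc'] r Hr. unfold ER_inv. destruct (Req_EM_T (h y) 0) as [E|E]; simpl; auto.
    assert (0 < h y) by (specialize (Hcpos i); lra).
    assert (/ c (S i) <= / h y) by (apply Rinv_le_contravar; auto; lra). lra. }
  assert (Clow : / c 0%nat * rom low0 <= rint low0 (ER_inv h)).
  { apply (cheb low0 (ER_inv h) (/ c 0%nat) _ x (x + L)); auto; [apply Rlt_le, Rinv_0_lt_compat; auto|].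
    intros y [[Hy1 Hy2] Hc'] r Hr. unfold ER_inv. destruct (Req_EM_T (h y) 0) as [E|E]; simpl; auto.
    assert (0 <= h y) by (apply Hh; lra).
    assert (0 < h y) by lra.
    assert (/ c 0%nat <= / h y) by (apply Rinv_le_contravar; auto; lra). lra. }
  assert (BUN : 0 <= rint (U N) (ER_inv h)) by (apply (int_nonneg (U N) (ER_inv h) x (x + L)); auto).
  assert (Hsv : rom low0 / c 0%nat + rsum (fun i => m i * / c (S i)) N <= B).
  { pose proof (chain_le (fun i => rint (band i) (ER_inv h)) (fun i => rint (U i) (ER_inv h)) (fun i => proj2 (IB4 i)) N).
    simpl in H. pose proof (rsum_le _ _ N (fun k _ => Cbi k)). unfold Rdiv. lra. }
  exists (rsum m N). split; [apply rsum_nonneg; auto|]. split.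
  - assert (E1 : rom low0 <= c0 * B).
    { assert (rom low0 / c 0%nat <= B).
      { pose proof (rsum_nonneg (fun i => m i * / c (S i)) N ltac:(intro k; apply Rmult_le_pos; [auto|apply Rlt_le, Rinv_0_lt_compat; auto])). lra. }
      unfold c in H; simpl in H. rewrite Rmult_1_r in H.
      apply Rmult_le_reg_r with (/ c0); [apply Rinv_0_lt_compat; auto|].
      replace (c0 * B * / c0) with B by (field; lra). exact H. }
    assert (E2 : rom (U N) <= A / (c0 * rho ^ N)).
    { assert (c N * rom (U N) <= A).
      { pose proof (rsum_nonneg (fun i => m i * c i) N ltac:(intro k; apply Rmult_le_pos; [auto|apply Rlt_le; auto])). lra. }
      fold (c N). specialize (Hcpos N).
      apply Rmult_le_reg_l with (c N); auto. unfold Rdiv. replace (c N * (A * / c N)) with A by (field; lra). exact H. }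
    lra.
  - assert (Hsu0 : 0 <= rsum (fun i => m i * c i) N)
      by (apply rsum_nonneg; intro k; apply Rmult_le_pos; [auto|apply Rlt_le; auto]).
    assert (Hsv0 : 0 <= rsum (fun i => m i * / c (S i)) N)
      by (apply rsum_nonneg; intro k; apply Rmult_le_pos; [auto|apply Rlt_le, Rinv_0_lt_compat; auto]).
    pose proof (dCS m c (fun i => / c (S i)) (/ rho) N ltac:(apply Rlt_le, Rinv_0_lt_compat; lra)) as D.
    assert (D' : / rho * (rsum m N * rsum m N) <= rsum (fun i => m i * c i) N * rsum (fun i => m i * / c (S i)) N).
    { apply D. intro i. split; auto. split; auto. split; [apply Rinv_0_lt_compat; auto|].
      unfold c. simpl. assert (rho ^ i <> 0) by (apply pow_nonzero; lra). field; repeat split; auto; lra. }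
    assert (HUN0 : 0 <= c N * rom (U N)) by (apply Rmult_le_pos; [apply Rlt_le; auto|auto]).
    assert (Hl0 : 0 <= rom low0 / c 0%nat) by (unfold Rdiv; apply Rmult_le_pos; [auto|apply Rlt_le, Rinv_0_lt_compat; auto]).
    assert (rsum (fun i => m i * c i) N * rsum (fun i => m i * / c (S i)) N <= A * B).
    { apply Rmult_le_compat; lra. }
    lra.
Qed.

Lemma CS_interval (h : R -> R) (Hm : measurable_on_Rplus h) (Hh : forall y, 0 <= y -> 0 <= h y)
  (x L A B : R) (Hx : 0 <= x) (HL : 0 < L)
  (HA : integral (Ixy x L) (ER_of h) = Fin A) (HB : integral (Ixy x L) (ER_inv h) = Fin B) : L * L <= A * B.
Proof.
  set (X := Ixy x L).
  assert (bX : bnd X x (x + L)) by (split; [lra|]; unfold X, Ixy; intros; lra).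
  apply limit_arg.
  - apply (int_nonneg X (ER_of h) x (x + L)); auto.
  - apply (int_nonneg X (ER_inv h) x (x + L)); auto.
  - auto.
  - exact (CS_approx h Hm Hh x L A B Hx HL HA HB).
Qed.


Lemma amgm0 x y k : 0 <= x -> 0 <= y -> 0 <= k -> x * y = k * k -> 2 * k <= x + y.
Proof. intros Hx Hy Hk E. pose proof (Rle_0_sqr (x-y)). unfold Rsqr in *. nra. Qed.

Lemma sq_le r k : 0 <= r -> 0 <= k -> k * k <= r * r -> k <= r.
Proof. intros. nra. Qed.

Lemma algebra P Q R S AJ BJ a : 0 <= P -> 0 <= Q -> 0 <= R -> 0 <= S ->
  4 <= P * Q -> (a - 2) * (a - 2) <= R * S -> 3 <= a <= 4 -> P + R <= AJ -> Q + S <= BJ ->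
  / 2 * P * (/ 2 * Q) - 1 <= 4 * (/ a * AJ * (/ a * BJ) - 1).
Proof.
  intros HP HQ HR HS H1 H2 Ha HAJ HBJ.
  set (p := sqrt (P * Q)). set (r := sqrt (R * S)). set (k := a - 2).
  assert (Hp : p * p = P * Q) by (apply sqrt_sqrt; nra).
  assert (Hr : r * r = R * S) by (apply sqrt_sqrt; nra).
  assert (Hp0 : 0 <= p) by apply sqrt_pos. assert (Hr0 : 0 <= r) by apply sqrt_pos.
  assert (Hp2 : 2 <= p) by (apply sq_le; lra).
  assert (Hrk : k <= r) by (apply sq_le; unfold k in *; lra).
  assert (Hc : 2 * (p * r) <= P * S + R * Q).
  { apply amgm0; [apply Rmult_le_pos; auto|apply Rmult_le_pos; auto|apply Rmult_le_pos; auto|]. transitivity ((p * p) * (r * r)); [rewrite Hp, Hr; ring|ring]. }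
  assert (Hk0 : 1 <= k) by (unfold k; lra).
  assert (Hprod : (p + k) * (p + k) <= AJ * BJ).
  { assert ((P + R) * (Q + S) <= AJ * BJ) by (apply Rmult_le_compat; lra).
    assert ((p + k) * (p + k) <= (p + r) * (p + r)) by (apply Rmult_le_compat; lra).
    assert (E1 : (p + r) * (p + r) = p * p + r * r + 2 * (p * r)) by ring.
    assert (E2 : (P + R) * (Q + S) = P * Q + R * S + (P * S + R * Q)) by ring.
    rewrite Hp, Hr in E1. lra. }
  assert (Ha2 : a * a <= 16) by nra.
  assert (Hapos : 0 < a) by lra.
  replace (/ a * AJ * (/ a * BJ)) with (AJ * BJ / (a * a)) by (field; lra).
  replace (/ 2 * P * (/ 2 * Q)) with (p * p / 4) by (rewrite Hp; field).
  assert (Goal : a * a * (p * p / 4 - 1) <= 4 * ((p + k) * (p + k)) - 4 * (a * a)).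
  { set (u := p / 2). assert (Hu : 1 <= u) by (unfold u; lra).
    replace p with (2 * u) by (unfold u; field).
    replace a with (2 + k) by (unfold k; ring).
    assert (Hk1 : 1 <= k <= 2) by (unfold k; lra).
    assert (E : 4 * ((2 * u + k) * (2 * u + k)) - 4 * ((2 + k) * (2 + k)) = 16 * (u - 1) * (u + 1 + k)) by ring.
    rewrite E.
    replace ((2 + k) * (2 + k) * (2 * u * (2 * u) / 4 - 1)) with ((2 + k) * (2 + k) * ((u - 1) * (u + 1))) by field.
    assert (0 <= (u - 1) * (u + 1)) by nra.
    assert ((2 + k) * (2 + k) * ((u - 1) * (u + 1)) <= 16 * ((u - 1) * (u + 1))) by (apply Rmult_le_compat_r; nra).
    assert ((u - 1) * (u + 1) <= (u - 1) * (u + 1 + k)) by (apply Rmult_le_compat_l; lra).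
    nra. }
  assert (AJ * BJ / (a * a) >= (p + k) * (p + k) / (a * a)).
  { apply Rle_ge. unfold Rdiv. apply Rmult_le_compat_r; [apply Rlt_le, Rinv_0_lt_compat; nra|lra]. }
  assert (p * p / 4 - 1 <= 4 * ((p + k) * (p + k) / (a * a) - 1)).
  { apply Rmult_le_reg_l with (a * a); [nra|].
    replace (a * a * (4 * ((p + k) * (p + k) / (a * a) - 1))) with (4 * ((p + k) * (p + k)) - 4 * (a * a)) by (field; lra).
    exact Goal. }
  lra.
Qed.


Lemma split_IJK x a f F : 2 <= a -> integral (Ixy x a) f = Fin F ->
  integral (Ixy x 2) f = Fin (rint (Ixy x 2) f) /\ integral (Ixy (x + 2) (a - 2)) f = Fin (rint (Ixy (x + 2) (a - 2)) f) /\
  rint (Ixy x 2) f + rint (Ixy (x + 2) (a - 2)) f <= F.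
Proof.
  intros Ha E. apply (int_split (Ixy x a) _ _ f x (x + a) F).
  - split; [lra|unfold Ixy; intros; lra].
  - split; [lra|unfold Ixy; intros; lra].
  - split; [lra|unfold Ixy; intros; lra].
  - intro t. unfold rdist.
    pose proof (om_split_c (fun y => Ixy x a y /\ ER_lt (Fin t) (f y)) x (x + a) (x + 2) ltac:(lra)
       ltac:(intros y [Hy _]; unfold Ixy in Hy; lra)) as G.
    rewrite (om_ext (fun y => Ixy x 2 y /\ ER_lt (Fin t) (f y)) (fun y => (Ixy x a y /\ ER_lt (Fin t) (f y)) /\ y < x + 2)).
    2:{ intro y; unfold Ixy; split; intros; repeat split; try tauto; lra. }
    rewrite (om_ext (fun y => Ixy (x + 2) (a - 2) y /\ ER_lt (Fin t) (f y)) (fun y => (Ixy x a y /\ ER_lt (Fin t) (f y)) /\ x + 2 <= y)).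
    2:{ intro y; unfold Ixy; split; intros; repeat split; try tauto; lra. }
    exact G.
  - exact E.
Qed.

Lemma term_bound h alpha n t : measurable_on_Rplus h -> (forall x, 0 <= x -> 0 <= h x) ->
  3 <= alpha n <= 4 -> bracket_term h alpha n = Fin t ->
  exists t2, bracket_term h (fun _ => 2) n = Fin t2 /\ t2 <= 4 * t.
Proof.
  intros Hm Hh Ha E.
  set (x := INR n). set (a := alpha n).
  assert (Hx : 0 <= x) by apply pos_INR.
  unfold bracket_term, avg in E. fold x a in E.
  destruct (integral (Ixy x a) (ER_of h)) as [AJ|] eqn:EA; [|simpl in E; discriminate].
  destruct (integral (Ixy x a) (ER_inv h)) as [BJ|] eqn:EB; [|simpl in E; discriminate].
  simpl in E. injection E as <-.
  destruct (split_IJK x a (ER_of h) AJ ltac:(unfold a; lra) EA) as [EI1 [EK1 S1]].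
  destruct (split_IJK x a (ER_inv h) BJ ltac:(unfold a; lra) EB) as [EI2 [EK2 S2]].
  pose proof (CS_interval h Hm Hh x 2 _ _ Hx ltac:(lra) EI1 EI2) as CI.
  pose proof (CS_interval h Hm Hh (x + 2) (a - 2) _ _ ltac:(lra) ltac:(unfold a; lra) EK1 EK2) as CK.
  assert (bI : bnd (Ixy x 2) x (x + 2)) by (split; [lra|unfold Ixy; intros; lra]).
  assert (bK : bnd (Ixy (x + 2) (a - 2)) (x + 2) (x + 2 + (a - 2))) by (split; [unfold a; lra|unfold Ixy; intros; lra]).
  pose proof (int_nonneg _ _ _ _ _ bI EI1). pose proof (int_nonneg _ _ _ _ _ bI EI2).
  pose proof (int_nonneg _ _ _ _ _ bK EK1). pose proof (int_nonneg _ _ _ _ _ bK EK2).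
  exists (/ 2 * rint (Ixy x 2) (ER_of h) * (/ 2 * rint (Ixy x 2) (ER_inv h)) - 1).
  split.
  - unfold bracket_term, avg. fold x. rewrite EI1, EI2. reflexivity.
  - apply algebra with (rint (Ixy (x + 2) (a - 2)) (ER_of h)) (rint (Ixy (x + 2) (a - 2)) (ER_inv h)); auto; lra.
Qed.

Lemma ER_sum_fin_terms F N v : ER_sum F N = Fin v -> forall k, (k < N)%nat -> exists t, F k = Fin t.
Proof.
  revert v. induction N; intros v E k Hk; [lia|]. simpl in E.
  destruct (ER_sum F N) as [w|] eqn:Ew; [|simpl in E; discriminate].
  destruct (F N) as [z|] eqn:Ez; [|simpl in E; discriminate].
  destruct (Nat.eq_dec k N) as [->|Hne]; [eauto|]. apply (IHN w); auto. lia.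
Qed.

Theorem proposition4p1 :
  exists c : R, 0 < c /\
    forall (h : R -> R) (alpha : nat -> R),
      measurable_on_Rplus h ->
      (forall x, 0 <= x -> 0 <= h x) ->
      (forall n, 3 <= alpha n <= 4) ->
      bracket h alpha <> Inf ->
      in_A2_l1 h /\ ER_le (A2_l1_const h) (ER_mult (Fin c) (bracket h alpha)).
Proof.
  exists 4. split; [lra|]. intros h alpha Hm Hh Ha Hb.
  destruct (bracket h alpha) as [beta|] eqn:Ebr; [|contradiction].
  unfold bracket in Ebr. apply sup_fin in Ebr. destruct Ebr as [Ub _].
  assert (Hfin : forall N, exists v, ER_sum (bracket_term h alpha) N = Fin v).
  { intro N. destruct (ER_sum (bracket_term h alpha) N) as [v|] eqn:E; [eauto|].
    exfalso. assert (beta + 1 <= beta); [|lra]. apply Ub. exists N. rewrite E. exact I. }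
  assert (Hterm : forall n, exists t, bracket_term h alpha n = Fin t).
  { intro n. destruct (Hfin (S n)) as [v Hv]. apply (ER_sum_fin_terms _ _ _ Hv). lia. }
  set (ta := fun n => match bracket_term h alpha n with Fin t => t | Inf => 0 end).
  set (t2 := fun n => match bracket_term h (fun _ => 2) n with Fin t => t | Inf => 0 end).
  assert (Hta : forall n, bracket_term h alpha n = Fin (ta n)).
  { intro n. destruct (Hterm n) as [t Ht]. unfold ta. rewrite Ht. reflexivity. }
  assert (Ht2 : forall n, bracket_term h (fun _ => 2) n = Fin (t2 n) /\ t2 n <= 4 * ta n).
  { intro n. destruct (term_bound h alpha n (ta n) Hm Hh (Ha n) (Hta n)) as [s [Hs1 Hs2]].
    unfold t2. rewrite Hs1. split; auto. }
  assert (Sa : forall N, ER_sum (bracket_term h alpha) N = Fin (rsum ta N)) by (intro N; apply ER_sum_Fin; auto).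
  assert (S2 : forall N, ER_sum (bracket_term h (fun _ => 2)) N = Fin (rsum t2 N)) by (intro N; apply ER_sum_Fin; intros; apply Ht2).
  assert (Bnd : forall N, rsum t2 N <= 4 * beta).
  { intro N. apply Rle_trans with (4 * rsum ta N).
    - clear -Ht2. induction N; [simpl; lra|]. cbn [rsum]. pose proof (proj2 (Ht2 N)). lra.
    - assert (rsum ta N <= beta) by (apply Ub; exists N; rewrite Sa; simpl; lra). lra. }
  destruct (sup_bounded (fun s => exists N, ER_le (Fin s) (ER_sum (bracket_term h (fun _ => 2)) N)) (4 * beta))
    as [m [Em [_ Hm4]]].
  { exists 0. exists 0%nat. simpl. lra. }
  { intros s [N HN]. rewrite S2 in HN. simpl in HN. specialize (Bnd N). lra. }
  unfold in_A2_l1, A2_l1_const, bracket. rewrite Em. split; [discriminate|]. simpl. lra.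
Qed.
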